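(* For every integer $n\ge 2$, the functional $$H_n=\sum_{i=1}^{n-1}\sum_{j=1}^{n-i}e_{i,j}^*\in\mathfrak{gl}(n)^*$$ is regular on $\mathfrak{gl}(n)$, i.e. $\dim\ker(B_{H_n})=n$.
   Context: Over $\mathbb{C}$. $e_{i,j}^*(X)=X_{i,j}$. For $f\in\mathfrak{g}^*$, $B_f(x,y)=f([x,y])$ and $\ker(B_f)=\{x\in\mathfrak{g}: f([x,y])=0\ \forall y\in\mathfrak{g}\}$. $f$ is regular if $\dim\ker(B_f)=\min_{g\in\mathfrak{g}^*}\dim\ker(B_g)$; for $\mathfrak{gl}(n)$ this minimum equals $n$. *)

(* Defs.v *)
From HB Require Import structures.
From mathcomp Require Import all_boot all_order all_algebra all_field.
Set Implicit Arguments. Unset Strict Implicit. Unset Printing Implicit Defensive.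
Import GRing.Theory Num.Theory.
Local Open Scope ring_scope.

Definition lie_bracket (F : nzRingType) (n : nat) (X Y : 'M[F]_n) : 'M[F]_n :=
  X *m Y - Y *m X.

(* The functional H_n = sum_{i=1}^{n-1} sum_{j=1}^{n-i} e_{i,j}^*.
   With 0-based indices i' = i-1, j' = j-1 the range is i' + j' <= n - 2,
   i.e. i' + j' + 1 < n. *)
Definition H_functional (F : nzRingType) (n : nat) (X : 'M[F]_n) : F :=
  \sum_(i < n) \sum_(j < n | ((i + j).+1 < n)%N) X i j.

Definition in_ker_B (F : nzRingType) (n : nat) (f : 'M[F]_n -> F) (X : 'M[F]_n) : Prop :=
  forall Y : 'M[F]_n, f (lie_bracket X Y) = 0.

(* Main.v *)
Require Import Defs.
From HB Require Import structures.
From mathcomp Require Import all_boot all_order all_algebra all_field.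
From mathcomp Require Import zify.
Import GRing.Theory Num.Theory.
Local Open Scope ring_scope.

Module Aux.
Set Implicit Arguments. Unset Strict Implicit. Unset Printing Implicit Defensive.

Section S.
Variable C : fieldType.

Lemma sum_one n (F : 'I_n -> C) (k0 : 'I_n) :
  (forall k, k != k0 -> F k = 0) -> \sum_k F k = F k0.
Proof. by move=> H; rewrite (bigD1 k0) //= big1 ?addr0 // => k /H. Qed.

Lemma sum_zero n (F : 'I_n -> C) : (forall k, F k = 0) -> \sum_k F k = 0.
Proof. by move=> H; rewrite big1. Qed.

Definition Am n : 'M[C]_n := \matrix_(i,j) (((i + j).+1 < n)%N)%:R.
Definition Mm n : 'M[C]_n := \matrix_(i,j)
  ((((i+j).+2 == n)%N)%:R - ((((i+j).+1 == n)%N) && (0 < i)%N && (0 < j)%N)%:R).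
Definition Em n : 'M[C]_n := \matrix_(i,j) ((((i : nat) == j) && (i.+1 < n)%N)%:R).

Lemma mulM_row n (v : 'rV[C]_n.+1) j :
  (v *m Mm n.+1) 0 j = (if (j < n)%N then v 0 (inord (n.+1 - j.+2)) else 0)
     - (if (0 < j)%N && (j < n)%N then v 0 (inord (n.+1 - j.+1)) else 0).
Proof.
rewrite mxE.
under eq_bigr do rewrite mxE mulrBr.
rewrite sumrB; congr (_ - _).
  case: ifP => hj.
    rewrite (@sum_one _ _ (inord (n.+1 - j.+2))).
      rewrite inordK; last lia.
      have -> : ((n.+1 - j.+2 + j).+2 == n.+1) by apply/eqP; lia.
      by rewrite mulr1.
    move=> k Hk; case: eqP => [H|]; rewrite ?mulr0 //; exfalso.
    by move/eqP: Hk; apply; apply/val_inj; rewrite /= inordK; lia.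
  apply: sum_zero => k; case: eqP => [H|]; rewrite ?mulr0 //; move/negbT: hj; lia.
case: ifP => hj.
  rewrite (@sum_one _ _ (inord (n.+1 - j.+1))).
    rewrite inordK ?eqxx; last lia.
    have -> : ((n.+1 - j.+1 + j).+1 == n.+1) && (0 < n.+1 - j.+1)%N && (0 < j)%N by apply/andP; split; [apply/andP; split|]; lia.
    by rewrite mulr1.
  move=> k Hk; case: andP => [[/andP[/eqP H1 H2] H3]|]; rewrite ?mulr0 //; exfalso.
  by move/eqP: Hk; apply; apply/val_inj; rewrite /= inordK; lia.
apply: sum_zero => k; case: andP => [[/andP[/eqP H1 H2] H3]|]; rewrite ?mulr0 //.
move/negbT: hj; lia.
Qed.

Ltac notconst b := lazymatch b with true => fail | false => fail | _ => idtac end.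
Ltac bsplit := repeat match goal with
  | |- context [nat_of_bool ?b] => notconst b; case: (boolP b) => ?
  | |- context [if ?b then _ else _] => notconst b; case: (boolP b) => ?
  end.
Ltac isplit := repeat match goal with
  | |- context [if ?b then _ else _] => notconst b; case: (boolP b) => ?
  end; rewrite /=.
Ltac inordK_all := repeat (rewrite inordK; last lia).
Ltac fin := rewrite /= ?subr0 ?sub0r ?subrr ?oppr0 ?mulr0 ?mul0r ?mulr1 ?mul1r //; exfalso; lia.

Lemma trA n : (Am n)^T = Am n.
Proof. by apply/matrixP => i j; rewrite !mxE addnC. Qed.
Lemma trM n : (Mm n)^T = Mm n.
Proof. apply/matrixP => i j; rewrite !mxE addnC; bsplit; fin. Qed.
Lemma trE n : (Em n)^T = Em n.
Proof. apply/matrixP => i j; rewrite !mxE; bsplit; fin. Qed.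

Lemma mulE_l n (X : 'M[C]_n) i j : (Em n *m X) i j = if (i.+1 < n)%N then X i j else 0.
Proof.
rewrite mxE (@sum_one _ _ i) => [|k Hk]; rewrite mxE.
  by rewrite eqxx /=; case: ifP; rewrite ?mul1r ?mul0r.
by case: eqP => [/val_inj H|]; [rewrite H eqxx in Hk|rewrite mul0r].
Qed.

Lemma mulE_r p n (X : 'M[C]_(p,n)) i j : (X *m Em n) i j = if (j.+1 < n)%N then X i j else 0.
Proof.
rewrite mxE (@sum_one _ _ j) => [|k Hk]; rewrite mxE.
  by rewrite eqxx /=; case: ifP; rewrite ?mulr1 ?mulr0.
by case: eqP => [/val_inj H|]; [rewrite H eqxx in Hk|rewrite mulr0].
Qed.

Lemma mx_row_entry m n p (X : 'M[C]_(m,n)) (Y : 'M[C]_(n,p)) i j :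
  (X *m Y) i j = (row i X *m Y) 0 j.
Proof. by rewrite !mxE; apply: eq_bigr => k _; rewrite !mxE. Qed.

Lemma AM n : Am n.+1 *m Mm n.+1 = Em n.+1.
Proof.
apply/matrixP => i j.
rewrite mx_row_entry mulM_row; isplit; rewrite ?mxE; inordK_all; bsplit; fin.
Qed.

Lemma MA n : Mm n.+1 *m Am n.+1 = Em n.+1.
Proof. by rewrite -[LHS]trmxK trmx_mul trA trM AM trE. Qed.

Lemma EA n : Em n *m Am n = Am n.
Proof. apply/matrixP => i j; rewrite mulE_l !mxE; bsplit; fin. Qed.
Lemma EM n : Em n *m Mm n = Mm n.
Proof. apply/matrixP => i j; rewrite mulE_l !mxE; bsplit; fin. Qed.

End S.

Lemma comm_transfer (R : nzRingType) (P Q X : R) :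
  P * Q = Q * P -> P * Q * P = P -> Q * P * Q = Q -> X * P = P * X -> X * Q = Q * X.
Proof.
move=> h1 h2 h3 hx.
have h2' : P * (Q * P) = P by rewrite mulrA.
have eXP : X * P = P * Q * (X * P) by rewrite hx mulrA h2.
have ePX : P * X = (P * X) * (Q * P) by rewrite -hx -mulrA h2'.
have L : X * (P * Q) = P * Q * X * (P * Q) by rewrite mulrA eXP !mulrA.
have R' : P * Q * X = P * Q * X * (P * Q).
  by rewrite h1 -[LHS]mulrA [in LHS]ePX !mulrA.
have XE : X * (P * Q) = P * Q * X by rewrite L -R'.
have XE' : X * (Q * P) = Q * P * X by rewrite -h1.
symmetry.
transitivity (Q * (X * (P * Q))); first by rewrite XE !mulrA h3.
transitivity (X * (Q * P) * Q).
  by rewrite XE' !mulrA -(mulrA Q X P) hx !mulrA.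
by rewrite -mulrA h3.
Qed.

Ltac notconst b := lazymatch b with true => fail | false => fail | _ => idtac end.
Ltac isplit := repeat match goal with
  | |- context [if ?b then _ else _] => notconst b; case: (boolP b) => ?
  end; rewrite /=.

Section K.
Variable C : fieldType.
Variable n : nat.
Hypothesis hn : (0 < n)%N.

Definition rk (j : nat) : nat :=
  (if j == n then n else if (2 * j < n) then (2 * j) else (2 * (n - 1 - j)).+1)%N.
Definition ps (k : nat) : nat :=
  (if k %% 2 == 1 then (n - 1 - k %/ 2) else (k %/ 2))%N.

Definition e0 : 'rV[C]_n.+1 := delta_mx 0 ord0.
Definition vk (k : nat) : 'rV[C]_n.+1 := e0 *m (Mm C n.+1) ^+ k.

Lemma vkS k : vk k.+1 = vk k *m Mm C n.+1.
Proof. by rewrite /vk exprSr -mulmxE mulmxA. Qed.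

Lemma vk_tri k : (k < n)%N ->
  (forall j : 'I_n.+1, (k < rk j)%N -> vk k 0 j = 0) /\ vk k 0 (inord (ps k)) != 0.
Proof.
elim: k => [_|k IH hk].
  split.
    move=> j; rewrite /vk expr0 mulmx1 /e0 mxE /rk => H.
    suff -> : (j == ord0) = false by rewrite andbF.
    by apply/negP => /eqP Hj; move: H; rewrite Hj /=; isplit; lia.
  rewrite /vk expr0 mulmx1 /e0 mxE /ps /=.
  have -> : (inord (0 %/ 2) : 'I_n.+1) == ord0 by apply/eqP/val_inj; rewrite /= inordK.
  by rewrite oner_eq0.
have [IH1 IH2] := IH (ltnW hk).
split.
  move=> j Hj; rewrite vkS mulM_row.
  isplit; rewrite ?IH1 ?subr0 //; rewrite inordK; try lia; move: Hj; rewrite /rk; isplit; lia.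
rewrite vkS mulM_row inordK; last by rewrite /ps; isplit; lia.
have [ev|od] := boolP ((k.+1) %% 2 == 0)%N.
  have -> : (ps k.+1 < n)%N by rewrite /ps; isplit; lia.
  rewrite IH1 ?sub0r ?oppr_eq0; last by rewrite inordK /rk /ps; isplit; lia.
  have -> : (0 < ps k.+1)%N by rewrite /ps; isplit; lia.
  rewrite /=.
  have -> : (inord (n.+1 - (ps k.+1).+1) : 'I_n.+1) = inord (ps k).
    by congr inord; rewrite /ps; isplit; lia.
  by [].
have -> : (ps k.+1 < n)%N by rewrite /ps; isplit; lia.
have -> : (inord (n.+1 - (ps k.+1).+2) : 'I_n.+1) = inord (ps k).
  by congr inord; rewrite /ps; isplit; lia.
isplit; last by rewrite subr0.
rewrite (IH1 (inord (n.+1 - (ps k.+1).+1))); first by rewrite subr0.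
rewrite inordK /rk /ps; isplit; lia.
Qed.


Lemma scE p q (a : C) (A : 'M[C]_(p,q)) i j : (a *: A) i j = a * A i j.
Proof. by rewrite mxE. Qed.
Lemma addE p q (A B : 'M[C]_(p,q)) i j : (A + B) i j = A i j + B i j.
Proof. by rewrite mxE. Qed.
Lemma zeroE p q i j : (0 : 'M[C]_(p,q)) i j = 0.
Proof. by rewrite mxE. Qed.

Lemma rk_ps k : (k < n)%N -> rk (ps k) = k.
Proof. by move=> hk; rewrite /ps; isplit; rewrite /rk; isplit; lia. Qed.

Lemma vk_free m : (m <= n)%N -> forall d : nat -> C,
  \sum_(k < m) d k *: vk k = 0 -> forall k, (k < m)%N -> d k = 0.
Proof.
elim: m => [|m IH] hm d H k hk; first by [].
move: H; rewrite big_ord_recr /= => H.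
have hdm : d m = 0.
  have := congr1 (fun v : 'rV[C]_n.+1 => v 0 (inord (ps m))) H.
  rewrite addE zeroE summxE big1 ?add0r.
    rewrite scE => /eqP; rewrite mulf_eq0 => /orP[/eqP //|].
    by have [_ /negPf ->] := vk_tri hm.
  move=> i _; rewrite scE (proj1 (vk_tri (ltn_trans (ltn_ord i) hm))) ?mulr0 //.
  by rewrite inordK ?rk_ps //; rewrite /ps; isplit; lia.
move: H; rewrite hdm scale0r addr0 => H.
have [->|hk'] := eqVneq k m; first by [].
apply: (IH (ltnW hm) d H); lia.
Qed.

Definition elast : 'rV[C]_n.+1 := delta_mx 0 ord_max.
Definition wv : 'rV[C]_n.+1 := e0 + elast.

Lemma elastM : elast *m Mm C n.+1 = 0.
Proof.
apply/rowP => j; rewrite mulM_row !mxE.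
isplit; rewrite ?mxE /=; try (rewrite ?subr0 ?sub0r ?oppr0 //).
all: try (have -> : (inord (n.+1 - j.+2) == ord_max :> 'I_n.+1) = false by
  apply/negP => /eqP/(congr1 val); rewrite /= inordK; lia).
all: try (have -> : (inord (n.+1 - j.+1) == ord_max :> 'I_n.+1) = false by
  apply/negP => /eqP/(congr1 val); rewrite /= inordK; lia).
all: by rewrite ?andbF /= ?subr0 ?oppr0.
Qed.

Lemma wvX k : wv *m (Mm C n.+1) ^+ k.+1 = vk k.+1.
Proof. by rewrite /vk /wv exprS -mulmxE !mulmxA mulmxDl elastM addr0. Qed.

Lemma vk_last k : vk k 0 ord_max = 0.
Proof.
case: k => [|k].
  rewrite /vk expr0 mulmx1 /e0 mxE.
  have -> : (ord_max == ord0 :> 'I_n.+1) = false by apply/negP => /eqP/(congr1 val) /=; lia.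
  by rewrite andbF.
rewrite vkS mulM_row /=; isplit; try lia; by rewrite subr0.
Qed.

Lemma kry_inj (c : 'I_n.+1 -> C) :
  \sum_k c k *: (wv *m (Mm C n.+1) ^+ k) = 0 -> forall k, c k = 0.
Proof.
move=> H.
have H' : c ord0 *: wv + \sum_(i < n) c (lift ord0 i) *: vk i.+1 = 0.
  rewrite -[in RHS]H big_ord_recl expr0 mulmx1; congr (_ + _); apply: eq_bigr => i _.
  by rewrite lift0 wvX.
have c0 : c ord0 = 0.
  have := congr1 (fun v : 'rV[C]_n.+1 => v 0 ord_max) H'.
  rewrite addE zeroE summxE big1 ?addr0; last by move=> i _; rewrite scE vk_last mulr0.
  rewrite scE /wv addE /elast [X in _ + X]mxE !eqxx /=.
  have e0l : e0 0 ord_max = 0 by have := vk_last 0; rewrite /vk expr0 mulmx1.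
  by rewrite e0l add0r mulr1.
move: H'; rewrite c0 scale0r add0r => H2.
set z := \sum_(i < n) c (lift ord0 i) *: vk i.
have zM : z *m Mm C n.+1 = 0.
  rewrite -H2 /z mulmx_suml; apply: eq_bigr => i _; by rewrite -scalemxAl vkS.
have zl : z 0 ord_max = 0.
  by rewrite /z summxE big1 // => i _; rewrite scE vk_last mulr0.
have z0 : z = 0.
  have -> : z = z *m Em C n.+1.
    by apply/rowP => j; rewrite mulE_r; case: ifP => // /negbT hj;
      rewrite -zl; congr (z 0 _); apply/val_inj => /=; move: (ltn_ord j) hj; lia.
  by rewrite -MA mulmxA zM mul0mx.
have hd := @vk_free n (leqnn n) (fun k => c (inord k.+1)).
move=> k; case: (posnP k) => [k0|kpos].
  by rewrite (_ : k = ord0) //; apply/val_inj.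
have -> : k = inord (k.-1).+1 by apply/val_inj; rewrite /= prednK // inordK.
apply: hd; last by move: (ltn_ord k); lia.
rewrite -[RHS]z0 /z; apply: eq_bigr => i _; congr (c _ *: _).
by apply/val_inj; rewrite /= inordK ?lift0 //; move: (ltn_ord i); lia.
Qed.

End K.

Section F.
Variable C : fieldType.

Lemma Hf N (Z : 'M[C]_N) : H_functional Z = \tr (Z *m Am C N).
Proof.
rewrite /H_functional /mxtrace; apply: eq_bigr => i _; rewrite mxE big_mkcond.
apply: eq_bigr => j _; rewrite mxE addnC; case: ifP => _; by rewrite ?mulr1 ?mulr0.
Qed.

Lemma tr_delta N (D : 'M[C]_N) i j : \tr (delta_mx i j *m D) = D j i.
Proof.
rewrite /mxtrace (@sum_one _ _ _ i) => [|k Hk].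
  rewrite mxE (@sum_one _ _ _ j) => [|l Hl]; first by rewrite mxE !eqxx mul1r.
  by rewrite mxE (negbTE Hl) andbF mul0r.
rewrite mxE big1 // => l _; by rewrite mxE (negbTE Hk) mul0r.
Qed.

Lemma ker_iff N (X : 'M[C]_N) :
  in_ker_B (@H_functional C N) X <-> X *m Am C N = Am C N *m X.
Proof.
have key : forall Y, H_functional (lie_bracket X Y) = \tr (Y *m (Am C N *m X - X *m Am C N)).
  move=> Y; rewrite Hf /lie_bracket mulmxBl mulmxBr !linearB /=.
  congr (_ - _); last by rewrite mulmxA.
  by rewrite -mulmxA mxtrace_mulC -mulmxA.
split.
  move=> H; apply/eqP; rewrite eq_sym -subr_eq0; apply/eqP/matrixP => i j.
  by have := H (delta_mx j i); rewrite key tr_delta => ->; rewrite mxE.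
by move=> H Y; rewrite key H subrr mulmx0 mxtrace0.
Qed.

Lemma commAM n (X : 'M[C]_n.+1) :
  X *m Am C n.+1 = Am C n.+1 *m X <-> X *m Mm C n.+1 = Mm C n.+1 *m X.
Proof.
have h1 : Am C n.+1 * Mm C n.+1 = Mm C n.+1 * Am C n.+1 by rewrite -!mulmxE AM MA.
have h2 : Am C n.+1 * Mm C n.+1 * Am C n.+1 = Am C n.+1 by rewrite -!mulmxE AM EA.
have h3 : Mm C n.+1 * Am C n.+1 * Mm C n.+1 = Mm C n.+1 by rewrite -!mulmxE MA EM.
rewrite !mulmxE; split; first exact: comm_transfer.
by apply: comm_transfer => //; rewrite h1.
Qed.
End F.

Section G.
Variable C : fieldType.
Variable n : nat.
Hypothesis hn : (0 < n)%N.

Let M := Mm C n.+1.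
Let T := [tuple M ^+ i | i < n.+1].
Let W := [tuple wv C n *m M ^+ i | i < n.+1].

Lemma W_full : <<W>>%VS = fullv.
Proof.
have fW : free W.
  apply/freeP => k Hk; apply: (kry_inj hn); rewrite -[RHS]Hk.
  by apply: eq_bigr => i _; rewrite nth_mktuple.
apply/eqP; rewrite eqEdim subvf dimvf /=.
move/eqP: fW => ->; rewrite size_tuple.
by have := dim_matrix C 1 n.+1; move=> ->; lia.
Qed.

Lemma comm_pow (Z : 'M[C]_n.+1) k : Z *m M = M *m Z -> Z *m M ^+ k = M ^+ k *m Z.
Proof.
rewrite !mulmxE => h.
exact: (commrX k h).
Qed.

Lemma memT X : X \in <<T>>%VS <-> X *m M = M *m X.
Proof.
split.
  move/coord_span => ->.
  rewrite mulmx_suml mulmx_sumr; apply: eq_bigr => i _.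
  by rewrite nth_mktuple -scalemxAl -scalemxAr !mulmxE -exprSr exprS.
move=> hX.
set y := wv C n *m X.
have yW : y \in <<W>>%VS by rewrite W_full memvf.
set cf := fun i => coord W i y.
set Z := X - \sum_i cf i *: M ^+ i.
have hZ : Z *m M = M *m Z.
  rewrite /Z mulmxBl mulmxBr hX; congr (_ - _).
  rewrite mulmx_suml mulmx_sumr; apply: eq_bigr => i _.
  by rewrite -scalemxAl -scalemxAr !mulmxE -exprSr exprS.
have wZ : wv C n *m Z = 0.
  rewrite /Z mulmxBr -/y {1}(coord_span yW) mulmx_sumr; apply/eqP; rewrite subr_eq0; apply/eqP.
  by apply: eq_bigr => i _; rewrite nth_mktuple scalemxAr.
have uZ : forall u : 'rV[C]_n.+1, u *m Z = 0.
  move=> u; have uW : u \in <<W>>%VS by rewrite W_full memvf.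
  rewrite (coord_span uW) mulmx_suml big1 // => i _.
  by rewrite nth_mktuple -scalemxAl -mulmxA -comm_pow // mulmxA wZ mul0mx scaler0.
have Z0 : Z = 0.
  by apply/row_matrixP => i; rewrite row0 rowE uZ.
have -> : X = \sum_i cf i *: M ^+ i by apply/eqP; rewrite -subr_eq0 -/Z Z0.
apply: rpred_sum => i _; apply: rpredZ; apply: memv_span.
rewrite -(nth_mktuple (fun i : 'I_n.+1 => M ^+ i) 0 i).
by apply: mem_nth; rewrite size_tuple.
Qed.

Lemma dimT : \dim <<T>>%VS = n.+1.
Proof.
have fT : free T.
  apply/freeP => k Hk; apply: (kry_inj hn).
  have := congr1 (fun Y => wv C n *m Y) Hk; rewrite mulmx0 mulmx_sumr => H; rewrite -[RHS]H.
  by apply: eq_bigr => i _; rewrite nth_mktuple scalemxAr.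
by move/eqP: fT => ->; rewrite size_tuple.
Qed.

Lemma final_G : exists K : {vspace 'M[C]_n.+1},
    (forall X : 'M[C]_n.+1, X \in K <-> in_ker_B (@H_functional C n.+1) X) /\
    \dim K = n.+1.
Proof.
exists <<T>>%VS; split; last exact: dimT.
move=> X; rewrite memT ker_iff; exact: iff_sym (commAM X).
Qed.
End G.


End Aux.
Import Aux.

Theorem theorem3p18 (C : numClosedFieldType) (n : nat) (hn : (2 <= n)%N) :
  exists K : {vspace 'M[C]_n},
    (forall X : 'M[C]_n, X \in K <-> in_ker_B (@H_functional C n) X) /\
    \dim K = n.
Proof.
case: n hn => [|[|n]] // hn.
exact: (@Aux.final_G C n.+1 isT).
Qed.
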